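(* Let $A\in\mathbb{R}^{r\times n}$, $\mathcal{X}\subseteq\mathbb{R}^n$, and let $f:\mathcal{D}\to\mathbb{R}$ be upper semicontinuous and quasi-convex, where $\mathcal{D}\subseteq\mathbb{R}^r$ is open and convex, and the set $A\mathcal{X}=\{Ax: x\in\mathcal{X}\}$ is compact with $A\mathcal{X}\subseteq\mathcal{D}$. Then there exists $c\in\mathbb{R}^r$ such that every optimal solution of $\max_{x\in\mathcal{X}}c^\top Ax$ is also an optimal solution of $\max\{f(Ax): x\in\mathcal{X}\}$.
   Context: A function $g:\mathcal{D}\to\mathbb{R}$ on a convex open set $\mathcal{D}$ is quasi-convex if $\{x\in\mathcal{D}: g(x)\le t\}$ is convex for every $t\in\mathbb{R}$. *)

(* Defs.v *)
From HB Require Import structures.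
From mathcomp Require Import all_boot all_order all_algebra.
From mathcomp Require Import all_classical all_reals all_analysis.
Set Implicit Arguments. Unset Strict Implicit. Unset Printing Implicit Defensive.
Import Order.TTheory GRing.Theory Num.Theory.
Import numFieldNormedType.Exports.
Local Open Scope classical_set_scope.
Local Open Scope ring_scope.

Definition quasi_convex_on {R : realType} {r : nat} (D : set 'cV[R]_r)
  (g : 'cV[R]_r -> R) : Prop :=
  forall t : R, convex_set [set x | D x /\ g x <= t].

Definition usc_on {R : realType} {r : nat} (D : set 'cV[R]_r)
  (g : 'cV[R]_r -> R) : Prop :=
  forall x, D x -> forall t : R, g x < t ->
    \forall y \near x, D y -> g y < t.

Definition lin_image {R : realType} {r n : nat} (A : 'M[R]_(r, n))
  (X : set 'cV[R]_n) : set 'cV[R]_r := [set y | exists2 x, X x & y = A *m x].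

Definition dotc {R : realType} {r : nat} (c y : 'cV[R]_r) : R := (c^T *m y) 0 0.

(* Main.v *)
Require Import Defs.
From HB Require Import structures.
From mathcomp Require Import all_boot all_order all_algebra.
From mathcomp Require Import all_classical all_reals all_analysis.
From mathcomp Require Import ring lra.
Import Order.TTheory GRing.Theory Num.Theory.
Import numFieldNormedType.Exports.
Local Open Scope classical_set_scope.
Local Open Scope ring_scope.
Lemma convexP (R : realType) (r : nat) (A : set 'cV[R]_r) :
  convex_set A -> forall x y (t : R), 0 <= t -> t <= 1 -> A x -> A y ->
  A (t *: x + (1 - t) *: y).
Proof.
move=> cA x y t t0 t1 Ax Ay.
have := cA x y (Itv01 t0 t1); rewrite !inE => /(_ Ax Ay).
by [].
Qed.

Lemma dotcE (R : realType) (r : nat) (c y : 'cV[R]_r) :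
  dotc c y = \sum_i c i 0 * y i 0.
Proof. by rewrite /dotc mxE; apply: eq_bigr => i _; rewrite mxE. Qed.
Section dot.
Context (R : realType) (r : nat).
Implicit Types u v w : 'cV[R]_r.
Lemma dotcDr u v w : dotc u (v + w) = dotc u v + dotc u w.
Proof. by rewrite /dotc mulmxDr mxE. Qed.
Lemma dotcDl u v w : dotc (v + w) u = dotc v u + dotc w u.
Proof. by rewrite /dotc linearD /= mulmxDl mxE. Qed.
Lemma dotcZr a u v : dotc u (a *: v) = a * dotc u v.
Proof. by rewrite /dotc -scalemxAr mxE. Qed.
Lemma dotcZl a u v : dotc (a *: u) v = a * dotc u v.
Proof. by rewrite /dotc linearZ /= -scalemxAl mxE. Qed.
Lemma dotcNr u v : dotc u (- v) = - dotc u v.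
Proof. by rewrite -scaleN1r dotcZr mulN1r. Qed.
Lemma dotcNl u v : dotc (- u) v = - dotc u v.
Proof. by rewrite -scaleN1r dotcZl mulN1r. Qed.
Lemma dotcBr u v w : dotc u (v - w) = dotc u v - dotc u w.
Proof. by rewrite dotcDr dotcNr. Qed.
Lemma dotcBl u v w : dotc (v - w) u = dotc v u - dotc w u.
Proof. by rewrite dotcDl dotcNl. Qed.
Lemma dotcC u v : dotc u v = dotc v u.
Proof. by rewrite !dotcE; apply: eq_bigr => i _; rewrite mulrC. Qed.
Lemma dotc0r u : dotc u 0 = 0.
Proof. by rewrite /dotc mulmx0 mxE. Qed.
Lemma dotc0l u : dotc 0 u = 0.
Proof. by rewrite dotcC dotc0r. Qed.
Lemma dotc_ge0 u : 0 <= dotc u u.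
Proof. by rewrite dotcE; apply: sumr_ge0 => i _; rewrite -expr2 sqr_ge0. Qed.
Lemma dotc_gt0 u : u != 0 -> 0 < dotc u u.
Proof.
move=> u0; rewrite lt_neqAle dotc_ge0 andbT eq_sym; apply: contra u0 => /eqP.
rewrite dotcE => /eqP; rewrite psumr_eq0; last by move=> i _; rewrite -expr2 sqr_ge0.
move=> /allP H; apply/eqP/matrixP => i j; rewrite (ord1 j) mxE.
by have /(_ (mem_index_enum i)) := H i; rewrite -expr2 sqrf_eq0 => /eqP.
Qed.
End dot.
Lemma cont_sum (R : realType) (T : topologicalType) (I : Type) (s : seq I)
  (g : I -> T -> R) : (forall i, continuous (g i)) ->
  continuous (fun x => \sum_(i <- s) g i x).
Proof.
move=> gc; elim: s => [|a s IH].
  under eq_fun do rewrite big_nil; exact: cst_continuous.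
under eq_fun do rewrite big_cons.
move=> x; apply: (@continuousD _ R^o); [exact: gc|exact: IH].
Qed.

Lemma dist_cont (R : realType) (r : nat) (q : 'cV[R]_r) :
  continuous (fun w : 'cV[R]_r => dotc (w - q) (w - q)).
Proof.
under eq_fun do rewrite dotcE.
apply: cont_sum => i.
have -> : (fun w : 'cV[R]_r => (w - q) i 0 * (w - q) i 0) =
  (fun w => (w i 0 - q i 0) * (w i 0 - q i 0)) by apply/funext => w; rewrite !mxE.
move=> x.
have h1 := @coord_continuous R r 1 i 0 x.
have h2 := @cst_continuous _ R (q i 0) x.
have h3 := continuousB h1 h2.
have h4 := continuousM h3 h3.
exact: h4.
Qed.

Lemma trmx_cont (R : realType) (m n : nat) :
  continuous (fun v : 'M[R]_(m, n) => v^T).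
Proof.
move=> x P /=; rewrite /nbhs /= => -[P0 hP0 sub].
exists (fun i j => P0 j i).
  by move=> i j; have := hP0 j i; rewrite mxE.
by move=> y /= hy; apply: sub => i j /=; rewrite mxE; exact: hy.
Qed.

Lemma box_compact (R : realType) (r : nat) (M : R) :
  compact [set v : 'cV[R]_r | forall i, `|v i 0| <= M].
Proof.
have cRB := @rV_compact _ r (fun=> `[- M, M]%classic)
  (fun=> @segment_compact R (- M) M).
have := continuous_compact (continuous_subspaceT (@trmx_cont R 1 r)) cRB.
congr compact; apply/seteqP; split => v /=.
  move=> [w hw <-] i; rewrite mxE; have := hw i; rewrite /= in_itv /=.
  by rewrite ler_norml.
move=> hv; exists v^T; last by rewrite trmxK.
by move=> i; rewrite /= mxE in_itv /= -ler_norml (ord1 ord0) hv.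
Qed.

Lemma seq_max (R : realType) (T : eqType) (f : T -> R) (s : seq T) x0 :
  x0 \in s -> exists2 z, z \in s & forall w, w \in s -> f w <= f z.
Proof.
elim: s x0 => [//|a s IH] x0 _.
case: (boolP (s == [::])) => [/eqP -> | ].
  by exists a; rewrite ?mem_head // => w; rewrite inE => /eqP ->.
case: s IH => [//|b s] IH _.
have [z zs hz] := IH b (mem_head _ _).
case: (leP (f a) (f z)) => h.
  exists z; first by rewrite inE zs orbT.
  by move=> w; rewrite inE => /orP [/eqP ->|/hz].
exists a; first exact: mem_head.
move=> w; rewrite inE => /orP [/eqP ->//|/hz/le_trans]; apply; exact: ltW.
Qed.

Lemma usc_max (R : realType) (r : nat) (D K : set 'cV[R]_r) (f : 'cV[R]_r -> R) :
  usc_on D f -> compact K -> K `<=` D -> K !=set0 ->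
  exists2 y, K y & forall z, K z -> f z <= f y.
Proof.
move=> usc cK KD [y0 Ky0].
apply: contrapT => hno.
have hz : forall y, K y -> exists z, K z /\ f y < f z.
  move=> y Ky; apply: contrapT => hn; apply: hno; exists y => // z Kz.
  rewrite leNgt; apply/negP => lt; apply: hn; by exists z.
rewrite compact_cover in cK.
have := cK _ K (fun z => interior [set w | D w -> f w < f z]).
case.
- by move=> i _; exact: open_interior.
- move=> y Ky; have [z [Kz lt]] := hz y Ky.
  exists z => //; exact: usc (KD y Ky) _ lt.
move=> D' sD' cov.
have [z1 D'z1 _] := cov y0 Ky0.
have [zm zmD hm] := @seq_max R _ f (finmap.enum_fset D') z1 D'z1.
have Kzm : K zm by have := sD' zm zmD; rewrite inE.
have [z D'z hin] := cov zm Kzm.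
have := nbhs_singleton hin (KD _ Kzm).
by rewrite ltNge (hm z D'z).
Qed.

Lemma open_ball_in (R : realType) (r : nat) (L : set 'cV[R]_r) z :
  open L -> L z -> exists2 e, 0 < e & forall w, `|z - w| < e -> L w.
Proof.
move=> oL Lz; have : nbhs z L by rewrite openE in oL; exact: oL Lz.
move/nbhs_ballP => [e e0 sub]; exists e => // w hw; apply: sub.
by rewrite -ball_normE /=.
Qed.

Lemma closure_near (R : realType) (r : nat) (A : set 'cV[R]_r) x e :
  closure A x -> 0 < e -> exists2 y, A y & `|x - y| < e.
Proof.
move=> cx e0; have [y [Ay bxy]] := cx _ (nbhsx_ballx x _ e0).
by exists y => //; rewrite -ball_normE in bxy.
Qed.

Lemma convC_gen (R : realType) (r : nat) (L : set 'cV[R]_r) (p : 'cV[R]_r) :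
  convex_set L ->
  convex_set [set w | exists2 t, 0 < t & exists2 z, L z & w = p + t *: (z - p)].
Proof.
move=> cL; apply/convex_setW => x y; rewrite !inE => -[t1 t10 [z1 Lz1 ->]] [t2 t20 [z2 Lz2 ->]].
move=> k k0 k1; rewrite inE.
set l := k%:num in k0 k1 *.
pose s := l * t1 + (1 - l) * t2.
have h1 := mulr_gt0 k0 t10.
have h2 : 0 <= (1 - l) * t2 by apply: mulr_ge0; lra.
have s0 : 0 < s by rewrite /s; lra.
exists s => //.
exists ((l * t1 / s) *: z1 + (1 - l * t1 / s) *: z2).
  apply: convexP => //.
  - by apply: divr_ge0; lra.
  - by rewrite ler_pdivrMr // mul1r /s; lra.
apply/matrixP => i j; rewrite !mxE /=.
rewrite -/l /unstable.onem /s; field; exact: lt0r_neq0 s0.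
Qed.

Lemma normZ_cV (R : realType) (r : nat) (a : R) (v : 'cV[R]_r) :
  `|a *: v| = `|a| * `|v|.
Proof. exact: normrZ. Qed.

Lemma cone_open (R : realType) (r : nat) (L : set 'cV[R]_r) (p : 'cV[R]_r) :
  open L -> forall w,
  [set w | exists2 t, 0 < t & exists2 z, L z & w = p + t *: (z - p)] w ->
  exists2 e, 0 < e & forall w', `|w - w'| < e ->
  [set w | exists2 t, 0 < t & exists2 z, L z & w = p + t *: (z - p)] w'.
Proof.
move=> oL w [t t0 [z Lz ->]].
have [e e0 he] := @open_ball_in _ _ L z oL Lz.
exists (t * e); first exact: mulr_gt0.
move=> w' hw'; exists t => //; exists (p + t^-1 *: (w' - p)).
  apply: he.
  have -> : z - (p + t^-1 *: (w' - p)) = t^-1 *: (p + t *: (z - p) - w').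
    apply/matrixP => i j; rewrite !mxE; field; exact: lt0r_neq0.
  rewrite normrZ gtr0_norm ?invr_gt0 // -(ltr_pM2l t0) mulrA mulfV ?mul1r //.
  exact: lt0r_neq0.
apply/matrixP => i j; rewrite !mxE; field; exact: lt0r_neq0.
Qed.

Lemma closure_seg (R : realType) (r : nat) (C : set 'cV[R]_r) m w d tau :
  convex_set C -> closure C m -> 0 < d ->
  (forall w', `|w - w'| < d -> C w') -> 0 < tau -> tau <= 1 ->
  C (m + tau *: (w - m)).
Proof.
move=> cC clm d0 hw t0 t1.
have [m' Cm' hm'] := @closure_near _ _ C m (d * tau) clm (mulr_gt0 d0 t0).
have -> : m + tau *: (w - m) =
    tau *: (w + ((1 - tau) / tau) *: (m - m')) + (1 - tau) *: m'.
  apply/matrixP => i j; rewrite !mxE; field; exact: lt0r_neq0.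
apply: convexP => //; first exact: ltW.
apply: hw.
have -> : w - (w + ((1 - tau) / tau) *: (m - m')) = - (((1 - tau) / tau) *: (m - m')).
  by apply/matrixP => i j; rewrite !mxE; ring.
rewrite normrN normrZ ger0_norm; last by apply: divr_ge0; lra.
set a := `|m - m'| in hm' *.
have a0 : 0 <= a by exact: normr_ge0.
rewrite mulrAC ltr_pdivrMr //; nra.
Qed.

Lemma sep (R : realType) (r : nat) (L : set 'cV[R]_r) (p : 'cV[R]_r) :
  open L -> convex_set L -> ~ L p ->
  exists c, forall z, L z -> dotc c z < dotc c p.
Proof.
move=> oL cL nLp.
case: (pselect (exists z0, L z0)) => [[z0 Lz0]|nL]; last first.
  by exists 0 => z Lz; exfalso; apply: nL; exists z.
pose C := [set w | exists2 t, 0 < t & exists2 z, L z & w = p + t *: (z - p)].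
have cC : convex_set C := @convC_gen _ _ L p cL.
have oC := @cone_open _ _ L p oL.
have LC : forall z, L z -> C z.
  move=> z Lz; exists 1 => //; exists z => //; by rewrite scale1r addrC subrK.
have [rho rho0 hrho] := @open_ball_in _ _ L z0 oL Lz0.
pose q := p + p - z0.
have nq : ~ closure C q.
  move=> clq; have [w Cw hw] := @closure_near _ _ C q rho clq rho0.
  case: Cw => t t0 [z Lz wE].
  apply: nLp.
  have Lw' : L (p + p - w).
    apply: hrho.
    have -> : z0 - (p + p - w) = - (q - w).
      by apply/matrixP => i j; rewrite !mxE; ring.
    by rewrite normrN.
  have -> : p = (1 / (1 + t)) *: (p + p - w) + (1 - 1 / (1 + t)) *: z.
    apply/matrixP => i j; rewrite wE !mxE; field.
    by apply: lt0r_neq0; lra.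
  apply: convexP => //.
    by apply: divr_ge0; lra.
  by rewrite ler_pdivrMr ?mul1r; lra.
pose phi w := dotc (w - q) (w - q).
pose a := phi z0.
have a0 : 0 <= a := dotc_ge0 _ _ _.
pose Q := \sum_i `|q i 0|.
pose F := closure C `&` [set w | phi w <= a].
have Fc : compact F.
  apply: (subclosed_compact _ (@box_compact R r (Q + 1 + a))).
    apply: closedI; first exact: closed_closure.
    apply: (@preimage_closed _ _ phi [set x | x <= a]); last exact: closed_le.
    by move=> x _; exact: dist_cont.
  move=> w [_ /= hw] i.
  have h1 : (w i 0 - q i 0) * (w i 0 - q i 0) <= a.
    apply: le_trans hw; rewrite /phi dotcE (bigD1 i) //= !mxE.
    rewrite lerDl; apply: sumr_ge0 => j _; rewrite -expr2; exact: sqr_ge0.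
  have h2 : `|q i 0| <= Q.
    rewrite /Q (bigD1 i) //= lerDl; apply: sumr_ge0 => j _; exact: normr_ge0.
  have h3 : `|w i 0 - q i 0| <= 1 + a.
    rewrite ler_norml; apply/andP; split; nra.
  have := ler_normD (w i 0 - q i 0) (q i 0); rewrite subrK; lra.
have F0 : F !=set0.
  exists z0; split; first exact: subset_closure (LC z0 Lz0).
  by rewrite /= le_refl.
have [m Fm hm] := @compact_EVT_min _ R phi F F0 Fc
  (continuous_subspaceT (@dist_cont R r q)).
rewrite inE in Fm; case: Fm => clm phim.
have hmin : forall w, closure C w -> phi m <= phi w.
  move=> w clw; case: (leP (phi w) a) => hw.
    by apply: hm; rewrite inE.
  by apply: le_trans phim (ltW hw).
pose c := m - q.
have c0 : c != 0.
  by apply/eqP => /eqP; rewrite subr_eq0 => /eqP mq; apply: nq; rewrite -mq.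
have cE : c = m - q by [].
clearbody c.
have var : forall w, C w -> 0 <= dotc c (w - m).
  move=> w Cw; have [d d0 hd] := oC w Cw.
  set b := dotc c (w - m); set e := dotc (w - m) (w - m).
  have e0 : 0 <= e := dotc_ge0 _ _ _.
  have key : forall tau, 0 < tau -> tau <= 1 ->
      0 <= 2 * tau * b + tau ^+ 2 * e.
    move=> tau t0 t1.
    have := hmin _ (subset_closure (@closure_seg _ _ C m w d tau cC clm d0 hd t0 t1)).
    rewrite /phi.
    have -> : m + tau *: (w - m) - q = c + tau *: (w - m).
      by rewrite cE; apply/matrixP => i j; rewrite !mxE; ring.
    rewrite -cE !dotcDl !dotcDr !dotcZl !dotcZr (dotcC _ _ (w - m) c) -/b -/e.
    rewrite expr2; lra.
  rewrite leNgt; apply/negP => bneg.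
  pose tau := - b / (e - b).
  have eb : 0 < e - b by lra.
  have t0 : 0 < tau by apply: divr_gt0; lra.
  have t1 : tau <= 1 by rewrite ler_pdivrMr // mul1r; lra.
  have te : tau * e = - b + tau * b.
    rewrite /tau; field; exact: lt0r_neq0.
  have := key tau t0 t1.
  have -> : 2 * tau * b + tau ^+ 2 * e = tau * b * (1 + tau).
    by rewrite expr2 -[tau * tau * e]mulrA te; ring.
  rewrite leNgt => /negP; apply.
  rewrite pmulr_llt0; last lra.
  by rewrite pmulr_rlt0.
have nonneg : forall z, L z -> 0 <= dotc c (z - p).
  move=> z Lz; rewrite leNgt; apply/negP => hb.
  set b := dotc c (z - p) in hb.
  set k := dotc c (p - m).
  pose s := (`|k| + 1) / (- b).
  have s0 : 0 < s by apply: divr_gt0; [have := normr_ge0 k; lra | lra].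
  have Cw : C (p + s *: (z - p)) by exists s => //; exists z.
  have := var _ Cw.
  have -> : p + s *: (z - p) - m = (p - m) + s *: (z - p).
    by apply/matrixP => i j; rewrite !mxE; ring.
  rewrite dotcDr dotcZr -/b -/k.
  have -> : s * b = - (`|k| + 1).
    rewrite /s; field; exact: ltr0_neq0.
  have := ler_norm k; lra.
have strict : forall z, L z -> 0 < dotc c (z - p).
  move=> z Lz; rewrite lt_neqAle nonneg // andbT; apply/negP => /eqP hb0.
  have [e e0 he] := @open_ball_in _ _ L z oL Lz.
  have cn : 0 < `|c| by rewrite normr_gt0.
  pose eps := e / (2 * `|c|).
  have eps0 : 0 < eps by apply: divr_gt0; lra.
  have Lz' : L (z - eps *: c).
    apply: he; rewrite opprB addrC subrK normrZ gtr0_norm //.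
    have -> : eps * `|c| = e / 2.
      by rewrite /eps; field; exact: lt0r_neq0.
    lra.
  have := nonneg _ Lz'.
  have -> : z - eps *: c - p = (z - p) - eps *: c.
    by apply/matrixP => i j; rewrite !mxE; ring.
  rewrite dotcBr dotcZr -hb0.
  have := dotc_gt0 _ _ _ c0.
  have := mulr_gt0 eps0 (dotc_gt0 _ _ _ c0); lra.
exists (- c) => z Lz; have := strict z Lz.
rewrite dotcBr !dotcNl; lra.
Qed.

Theorem proposition8 (R : realType) (r n : nat) (A : 'M[R]_(r, n))
  (X : set 'cV[R]_n) (D : set 'cV[R]_r) (f : 'cV[R]_r -> R) :
  open D -> convex_set D ->
  usc_on D f -> quasi_convex_on D f ->
  compact (lin_image A X) -> lin_image A X `<=` D ->
  exists c : 'cV[R]_r,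
    forall x, X x -> (forall y, X y -> dotc c (A *m y) <= dotc c (A *m x)) ->
      forall y, X y -> f (A *m y) <= f (A *m x).
Proof.
move=> oD cD usc qc cK KD.
case: (pselect (lin_image A X !=set0)) => [K0|nK]; last first.
  by exists 0 => x Xx; exfalso; apply: nK; exists (A *m x); exists x.
have [ys Kys hys] := @usc_max R r D _ f usc cK KD K0.
pose t := f ys.
pose L := [set z | D z /\ f z < t].
have oL : open L.
  rewrite openE => z [Dz fz].
  have h1 := usc z Dz t fz.
  have h2 : nbhs z D by rewrite openE in oD; exact: oD.
  rewrite /interior /=; apply: (filterS _ (filterI h1 h2)) => y [h Dy]; split => //; exact: h Dy.
have cL : convex_set L.
  move=> x y l; rewrite !inE => -[Dx fx] [Dy fy].
  have hx : x \in [set z | D z /\ f z <= Num.max (f x) (f y)].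
    by rewrite inE; split => //; rewrite le_max lexx.
  have hy : y \in [set z | D z /\ f z <= Num.max (f x) (f y)].
    by rewrite inE; split => //; rewrite le_max lexx orbT.
  have := qc (Num.max (f x) (f y)) x y l hx hy; rewrite !inE => -[Dc fc].
  by split => //; apply: le_lt_trans fc _; rewrite gt_max fx fy.
have nL : ~ L ys by case => _; rewrite ltxx.
have [c hc] := @sep R r L ys oL cL nL.
exists c => x Xx hopt y Xy.
have Ky : lin_image A X (A *m y) by exists y.
apply: le_trans (hys _ Ky) _.
rewrite leNgt; apply/negP => hlt.
have Lx : L (A *m x) by split => //; apply: KD; exists x.
have := hc _ Lx.
case: Kys => x' Xx' ->.
by rewrite ltNge hopt.
Qed.
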